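(* Let $q\ge 2$, $n\ge 1$, $h\in F(n,q)$ and $u\in\Pi([n])$. Then $$\kappa(h,u)=\left\lceil \log_q\big(\chi(G_{h,u})\big)\right\rceil ,$$ where $\chi(G_{h,u})$ is the chromatic number of the confusion graph $G_{h,u}$.
   Context: Let $q\ge 2$, $A=\{0,1,\dots,q-1\}$, $[n]=\{1,\dots,n\}$, and let $F(n,q)$ be the set of all maps $A^n\to A^n$ (automata networks). For $f\in F(m,q)$ and $i\in[m]$, $f_i:A^m\to A$ is the $i$-th coordinate function of $f$. The map $f^i\in F(m,q)$ is defined by $f^i(x)=(x_1,\dots,x_{i-1},f_i(x),x_{i+1},\dots,x_m)$. For $I\subseteq[m]$, $f^I\in F(m,q)$ is defined by $f^I(x)_j=f_j(x)$ if $j\in I$ and $f^I(x)_j=x_j$ otherwise. For a word $w=(w_1,\dots,w_t)$ over $[m]$, $f^w=f^{w_t}\circ\cdots\circ f^{w_1}$. $\Pi([m])$ is the set of permutations of $[m]$, written as words $w=(w_1,\dots,w_m)$ in which each element of $[m]$ occurs once; for $i\in[m]$, $w(i)$ denotes the position $j$ with $w_j=i$. $\mathrm{pr}_{[n]}:A^m\to A^n$ is the projection onto the first $n$ coordinates. For $m\ge n$, a pair $(f,w)$ with $f\in F(m,q)$, $w\in\Pi([m])$ sequentializes $h\in F(n,q)$ if $\mathrm{pr}_{[n]}\circ f^w=h\circ \mathrm{pr}_{[n]}$. For $u\in\Pi([n])$, $w\in\Pi([m])$ respects $u$ if for all $i,j\in[n]$, $u(i)<u(j)$ implies $w(i)<w(j)$.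 The cost of sequentialization $\kappa(h,u)$ is the smallest $k\ge 0$ such that there exist $f\in F(n+k,q)$ and $w\in\Pi([n+k])$ respecting $u$ such that $(f,w)$ sequentializes $h$. The confusion graph $G_{h,u}$ is the undirected graph with vertex set $A^n$ in which $x\neq x'$ are adjacent iff $h(x)\neq h(x')$ and there exists $i\in[n]$ with $h^{\{u_1,\dots,u_i\}}(x)=h^{\{u_1,\dots,u_i\}}(x')$. *)

(* Defs.v *)
From mathcomp Require Import all_boot all_fingroup.
Set Implicit Arguments. Unset Strict Implicit. Unset Printing Implicit Defensive.

(* Configurations x in A^n with A = {0,...,q-1} = 'I_q, coordinates indexed by 'I_n
   (coordinate i in [n] of the paper is index i-1 here). *)
Definition config (n q : nat) := {ffun 'I_n -> 'I_q}.
Definition AN (n q : nat) := config n q -> config n q.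

Definition updI n q (f : AN n q) (I : pred 'I_n) : AN n q :=
  fun x => [ffun j => if I j then f x j else x j].

Definition upd1 n q (f : AN n q) (i : 'I_n) : AN n q := updI f (pred1 i).

(* A permutation of [m] written as the word (w 0, w 1, ..., w (m-1)):
   w j is the letter at position j; the position of letter i is w^-1 i.
   f^w = f^{w_m} o ... o f^{w_1}: apply the updates in order of position. *)
Definition seq_apply m q (f : AN m q) (w : {perm 'I_m}) : AN m q :=
  fun x => foldl (fun y (j : 'I_m) => upd1 f (w j) y) x (enum 'I_m).

Definition emb n k (i : 'I_n) : 'I_(n + k) := widen_ord (leq_addr k n) i.
Definition proj n k q (x : config (n + k) q) : config n q := [ffun i => x (emb k i)].

Definition respects n k (u : {perm 'I_n}) (w : {perm 'I_(n + k)}) : Prop :=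
  forall i j : 'I_n, ((u^-1)%g i < (u^-1)%g j)%N -> (((w^-1)%g (emb k i)) < ((w^-1)%g (emb k j)))%N.

Definition sequentializes n k q (h : AN n q) (f : AN (n + k) q) (w : {perm 'I_(n + k)}) :=
  forall x : config (n + k) q, proj (seq_apply f w x) = h (proj x).

Definition seq_ok n q (h : AN n q) (u : {perm 'I_n}) (k : nat) : Prop :=
  exists (f : AN (n + k) q) (w : {perm 'I_(n + k)}), respects u w /\ sequentializes h f w.

Definition is_kappa n q (h : AN n q) (u : {perm 'I_n}) (K : nat) : Prop :=
  seq_ok h u K /\ forall k, seq_ok h u k -> (K <= k)%N.

(* Confusion graph G_{h,u}: x, x' adjacent iff x <> x', h x <> h x', and for some
   i in [n] (here i+1 with i : 'I_n), h^{u_1..u_{i+1}} x = h^{u_1..u_{i+1}} x'.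
   {u_1,...,u_{i+1}} = letters of u at positions <= i. *)
Definition prefix_set n (u : {perm 'I_n}) (i : 'I_n) : pred 'I_n :=
  fun j => ((u^-1)%g j <= i)%N.

Definition confusion n q (h : AN n q) (u : {perm 'I_n}) : rel (config n q) :=
  fun x x' => [&& x != x', h x != h x' &
     [exists i : 'I_n, updI h (prefix_set u i) x == updI h (prefix_set u i) x']].

Definition has_coloring (V : finType) (e : rel V) (k : nat) : bool :=
  [exists c : {ffun V -> 'I_k}, [forall x, forall y, e x y ==> (c x != c y)]].

Lemma has_coloring_card (V : finType) (e : rel V) (irr : irreflexive e) :
  exists k, has_coloring e k.
Proof.
exists #|V|; apply/existsP; exists [ffun x => enum_rank x].
apply/forallP=> x; apply/forallP=> y; apply/implyP=> exy.
rewrite !ffunE; apply/negP=> /eqP /enum_rank_inj exy'.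
by move: exy; rewrite exy' irr.
Qed.

Lemma confusion_irr n q (h : AN n q) (u : {perm 'I_n}) : irreflexive (confusion h u).
Proof. by move=> x; rewrite /confusion eqxx. Qed.

Definition chi_confusion n q (h : AN n q) (u : {perm 'I_n}) : nat :=
  ex_minn (has_coloring_card (confusion_irr h u)).

(* Main.v *)
Require Import Defs.
From mathcomp Require Import all_boot all_fingroup.
Set Implicit Arguments. Unset Strict Implicit. Unset Printing Implicit Defensive.

Section Run.
Variables (m q : nat) (f : AN m q) (w : {perm 'I_m}).

Definition step (y : config m q) (j : 'I_m) := upd1 f (w j) y.
Definition run t (z : config m q) := foldl step z (take t (enum 'I_m)).

Lemma run_final z : seq_apply f w z = run m z.
Proof. by rewrite /run take_oversize // size_enum_ord. Qed.

Lemma runS t z (ht : t < m) : run t.+1 z = upd1 f (w (Ordinal ht)) (run t z).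
Proof.
rewrite /run (take_nth (Ordinal ht)) ?size_enum_ord // foldl_rcons /step.
congr (upd1 _ (w _) _); apply: val_inj => /=; exact: nth_enum_ord.
Qed.

Lemma runA t z j : t <= m -> t <= (w^-1)%g j -> run t z j = z j.
Proof.
elim: t => [|t IH] ht hj; first by rewrite /run take0.
rewrite (runS _ ht) /upd1 /updI ffunE /=.
case: eqP => [E|_]; last by apply: IH => //; apply: ltnW.
by move: hj; rewrite E permK /= ltnn.
Qed.

Lemma runB t z j : t <= m -> (w^-1)%g j < t -> run t z j = f (run ((w^-1)%g j) z) j.
Proof.
elim: t => [|t IH] ht hj; first by rewrite /run take0.
rewrite (runS _ ht) /upd1 /updI ffunE /=.
case: eqP => [E|NE].
  by rewrite E permK.
apply: IH; first exact: ltnW.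
rewrite ltn_neqAle -ltnS hj andbT; apply/eqP=> E; apply: NE.
by rewrite -[j](permKV w); congr (w _); apply: val_inj.
Qed.

Lemma run_upd t z j : t <= m -> (w^-1)%g j < t -> run t z j = run m z j.
Proof. by move=> ht hj; rewrite !runB //; apply: leq_trans ht. Qed.

Lemma run_split t z : run m z = foldl step (run t z) (drop t (enum 'I_m)).
Proof.
rewrite {1}/run take_oversize ?size_enum_ord //.
by rewrite -{1}(cat_take_drop t (enum 'I_m)) foldl_cat.
Qed.

Lemma run_det t z z' : run t z = run t z' -> run m z = run m z'.
Proof. by move=> E; rewrite (run_split t z) (run_split t z') E. Qed.
End Run.
Section Lower.
Variables (q n k : nat) (hq : 0 < q) (h : AN n q) (u : {perm 'I_n})
  (f : AN (n + k) q) (w : {perm 'I_(n + k)}) (hr : respects u w) (hs : sequentializes h f w).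

Definition a0 : 'I_q := Ordinal hq.
Definition zx (x : config n q) : config (n + k) q :=
  [ffun j => match split j with inl i => x i | inr _ => a0 end].

Lemma ordP (j : 'I_(n + k)) : (exists l, j = emb k l) \/ (exists e, j = rshift n e).
Proof.
case: (splitP j) => [l E|e E]; [left; exists l | right; exists e]; exact: val_inj.
Qed.

Lemma split_emb (l : 'I_n) : split (emb k l) = inl l.
Proof.
case: (splitP (emb k l)) => [l' E|e E]; first by congr inl; apply: val_inj.
by have := ltn_ord l; rewrite /= in E; rewrite E ltnNge leq_addr.
Qed.

Lemma split_rshift (e : 'I_k) : split (rshift n e) = inr e.
Proof.
case: (splitP (rshift n e)) => [l' E|e' E]; last by congr inr; apply: val_inj => /=; move: E => /= /eqP; rewrite eqn_add2l => /eqP.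
by have := ltn_ord l'; rewrite /= in E; rewrite -E ltnNge leq_addr.
Qed.

Lemma proj_zx x : proj (zx x) = x.
Proof. by apply/ffunP => l; rewrite !ffunE split_emb. Qed.

Definition col (x : config n q) : config k q :=
  [ffun e => run f w (n + k) (zx x) (rshift n e)].

Lemma F1 x l : run f w (n + k) (zx x) (emb k l) = h x l.
Proof.
have := hs (zx x); rewrite proj_zx -run_final => E.
by rewrite -E ffunE.
Qed.

Lemma col_proper x y : confusion h u x y -> col x != col y.
Proof.
have hR := hr; rewrite /respects in hR.
case/and3P => _ hxy /existsP [i /eqP hi]; apply/negP => /eqP hc.
move/negP: hxy; apply; apply/eqP.
set t := ((w^-1)%g (emb k (u i))).+1.
have ht : t <= n + k by exact: ltn_ord.
have E : run f w t (zx x) = run f w t (zx y).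
  apply/ffunP => j; case: (ordP j) => [[l ->]|[e ->]].
    case: (ltnP ((w^-1)%g (emb k l)) t) => hj.
      rewrite (run_upd f (zx x) ht hj) (run_upd f (zx y) ht hj) !F1.
      have hl : prefix_set u i l.
        rewrite /prefix_set leqNgt; apply/negP => hil.
        have := hR (u i) l; rewrite permK => /(_ hil).
        by rewrite ltnNge -ltnS hj.
      by move/ffunP: hi => /(_ l); rewrite !ffunE hl.
    rewrite (runA f (zx x) ht hj) (runA f (zx y) ht hj) !ffunE split_emb.
    have hl : ~~ prefix_set u i l.
      apply/negP; rewrite /prefix_set leq_eqVlt => /orP [/eqP hil|hil].
        have el : l = u i by rewrite -[l](permKV u); congr (u _); apply: val_inj.
        by move: hj; rewrite el ltnn.
      have := hR l (u i); rewrite permK => /(_ hil) hw.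
      by move: hj; rewrite leqNgt ltnS (ltnW hw).
    by move/ffunP: hi => /(_ l); rewrite !ffunE (negbTE hl).
  case: (ltnP ((w^-1)%g (rshift n e)) t) => hj.
    rewrite (run_upd f (zx x) ht hj) (run_upd f (zx y) ht hj).
    by move/ffunP: hc => /(_ e); rewrite !ffunE.
  by rewrite (runA f (zx x) ht hj) (runA f (zx y) ht hj) !ffunE split_rshift.
have := run_det E; move=> Ef.
by apply/ffunP => l; rewrite -!F1 Ef.
Qed.

Lemma card_config : #|config k q| = q ^ k.
Proof. by rewrite card_ffun !card_ord. Qed.

Lemma lower_coloring : has_coloring (confusion h u) (q ^ k).
Proof.
apply/existsP; exists [ffun x => cast_ord card_config (enum_rank (col x))].
apply/forallP => x; apply/forallP => y; apply/implyP => hxy.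
rewrite !ffunE; apply/negP => /eqP /cast_ord_inj /enum_rank_inj E.
by move: (col_proper hxy); rewrite E eqxx.
Qed.

Lemma lower_bound : chi_confusion h u <= q ^ k.
Proof. rewrite /chi_confusion; case: ex_minnP => m _ hmin; exact: hmin lower_coloring. Qed.
End Lower.
Section Upper.
Variables (q n K : nat) (hq : 0 < q) (h : AN n q) (u : {perm 'I_n})
  (c : config n q -> config K q) (hc : forall x y, confusion h u x y -> c x != c y).

Definition cst : n + K = K + n := addnC n K.

Definition wfun (p : 'I_(n + K)) : 'I_(n + K) :=
  match split (cast_ord cst p) with
  | inl e => rshift n e
  | inr a => emb K (u a) end.

Definition wg (j : 'I_(n + K)) : 'I_(n + K) :=
  cast_ord (esym cst) (match split j with
   | inl l => rshift K ((u^-1)%g l)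
   | inr e => lshift n e end).

Lemma wK : cancel wfun wg.
Proof.
move=> p; rewrite /wfun; case E: (split (cast_ord cst p)) => [e|a].
  rewrite /wg (unsplitK (inr e : 'I_n + 'I_K)).
  have := splitK (cast_ord cst p); rewrite E /= => ->.
  exact: cast_ordK.
rewrite /wg split_emb permK.
have := splitK (cast_ord cst p); rewrite E /= => ->.
exact: cast_ordK.
Qed.

Definition wp : {perm 'I_(n + K)} := perm (can_inj wK).

Lemma wp_emb (l : 'I_n) : val ((wp^-1)%g (emb K l)) = K + (u^-1)%g l.
Proof.
have E : wp (cast_ord (esym cst) (rshift K ((u^-1)%g l))) = emb K l.
  by rewrite permE /wfun cast_ordKV (unsplitK (inr _ : 'I_K + 'I_n)) permKV.
by rewrite -E permK.
Qed.

Lemma wp_rshift (e : 'I_K) : val ((wp^-1)%g (rshift n e)) = e.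
Proof.
have E : wp (cast_ord (esym cst) (lshift n e)) = rshift n e.
  by rewrite permE /wfun cast_ordKV (unsplitK (inl _ : 'I_K + 'I_n)).
by rewrite -E permK.
Qed.

Lemma wp_respects : respects u wp.
Proof. by move=> i j hij; rewrite !wp_emb ltn_add2l. Qed.

Definition extras (z : config (n + K) q) : config K q := [ffun e => z (rshift n e)].

Definition fS (z : config (n + K) q) (j : 'I_(n + K)) : 'I_q :=
  match split j with
  | inl l =>
    let S := [pred m | (u^-1)%g m < (u^-1)%g l] in
    match [pick x | (updI h S x == proj z) && (c x == extras z)] with
    | Some x => h x l
    | None => a0 hq end
  | inr e => c (proj z) e end.

Definition fU : AN (n + K) q := fun z => [ffun j => fS z j].

Lemma fU_seq : sequentializes h fU wp.
Proof.
move=> z0; set x := proj z0.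
have hm : n + K <= n + K by [].
have hext : forall e : 'I_K, run fU wp (n + K) z0 (rshift n e) = c x e.
  move=> e; rewrite -run_final.
  rewrite run_final (runB fU z0 hm); last by rewrite wp_rshift (leq_trans (ltn_ord e)) // leq_addl.
  rewrite ffunE /fS split_rshift wp_rshift; congr (c _ e).
  apply/ffunP => l; rewrite ffunE /x ffunE (runA fU z0) //.
    by rewrite (leq_trans (ltnW (ltn_ord e))) // leq_addl.
  by rewrite wp_emb (leq_trans (ltnW (ltn_ord e))) // leq_addr.
suff H : forall p (l : 'I_n), (u^-1)%g l < p -> run fU wp (n + K) z0 (emb K l) = h x l.
  apply/ffunP => l; rewrite run_final ffunE; apply: (H n); exact: ltn_ord.
elim => [//|p IH] l hl.
set t := val ((wp^-1)%g (emb K l)).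
have ht : t <= n + K by apply: ltnW; exact: ltn_ord.
rewrite (runB fU z0 hm) ?ltn_ord // ffunE /fS split_emb.
set S := [pred m | (u^-1)%g m < (u^-1)%g l].
have hproj : proj (run fU wp t z0) = updI h S x.
  apply/ffunP => m; rewrite !ffunE /S /=.
  case: ifP => hm'.
    rewrite (run_upd fU z0 ht); last by rewrite /t !wp_emb ltn_add2l.
    by apply: IH; rewrite (leq_trans hm').
  rewrite (runA fU z0 ht); last by rewrite /t !wp_emb leq_add2l leqNgt hm'.
  by [].
have hex : extras (run fU wp t z0) = c x.
  apply/ffunP => e; rewrite ffunE (run_upd fU z0 ht) ?hext //.
  by rewrite wp_rshift /t wp_emb (leq_trans (ltn_ord e)) // leq_addr.
case: pickP => [y /andP [/eqP hy /eqP hcy]|none]; last first.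
  by have := none x; rewrite hproj hex !eqxx.
rewrite hproj in hy; rewrite hex in hcy.
case: (eqVneq y x) => [->//|nyx].
case: (eqVneq (h y) (h x)) => [->//|nhyx].
exfalso.
case E0: (nat_of_ord ((u^-1)%g l)) => [|v].
  have S0 : forall z, updI h S z = z.
    by move=> z; apply/ffunP => m; rewrite ffunE /S /= E0.
  by move: nyx; rewrite -(S0 y) hy S0 eqxx.
have hv : v < n by move: (ltn_ord ((u^-1)%g l)); rewrite E0 => /ltnW.
have hpre : updI h (prefix_set u (Ordinal hv)) =1 updI h S.
  by move=> z; apply/ffunP => m; rewrite !ffunE /prefix_set /S /= E0 ltnS.
have : confusion h u y x.
  rewrite /confusion nyx nhyx /=; apply/existsP; exists (Ordinal hv).
  by rewrite !hpre hy.
by move/hc; rewrite hcy eqxx.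
Qed.
End Upper.

Theorem mainTheorem1 (q n : nat) (hq : (2 <= q)%N) (hn : (1 <= n)%N)
  (h : AN n q) (u : {perm 'I_n}) :
  is_kappa h u (up_log q (chi_confusion h u)).
Proof.
have hq0 : 0 < q by apply: ltnW.
have hchi : has_coloring (confusion h u) (chi_confusion h u).
  by rewrite /chi_confusion; case: ex_minnP.
split; last first.
  move=> k [f [w [hr hs]]]; apply: up_log_min => //.
  exact: (lower_bound hq0 hr hs).
set chi := chi_confusion h u in hchi *.
set K := up_log q chi.
have hK : chi <= q ^ K by apply: up_logP.
case/existsP: hchi => c0 /forallP hc0.
set d : config K q := [ffun _ => a0 hq0].
pose c x := nth d (enum (config K q)) (c0 x).
have hc : forall x y, confusion h u x y -> c x != c y.
  move=> x y hxy; rewrite /c nth_uniq ?enum_uniq //.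
  - by have := hc0 x => /forallP /(_ y) /implyP; apply.
  - by rewrite -cardE (card_config q K) (leq_trans (ltn_ord _) hK).
  - by rewrite -cardE (card_config q K) (leq_trans (ltn_ord _) hK).
exists (fU hq0 h u c), (wp K u); split; first exact: wp_respects.
exact: fU_seq.
Qed.
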